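(* Let $q$ be a prime power, $1\le k$, $k+1<n\le m$, let $g_1,\dots,g_n\in\mathbb{F}_{q^m}$ be linearly independent over $\mathbb{F}_q$, and let $\mathcal{G}$ be the Gabidulin code of dimension $k$ with respect to $g_1,\dots,g_n$. Let $f\in\mathcal{L}_q(x,\mathbb{F}_{q^m})$ be of the form $f(x)=x^{q^{k+1}}-a_1x^{q^k}+\sum_{i=0}^{k-1}c_ix^{q^i}$ with $a_1,c_i\in\mathbb{F}_{q^m}$, and let $\sigma_f=(f(g_1),\dots,f(g_n))$. Then $\sigma_f$ is not a deep hole of $\mathcal{G}$ in the rank metric (i.e. $d_R(\sigma_f,\mathcal{G})\ne n-k$) if and only if there exist $\mathbb{F}_q$-linearly independent elements $\beta_1,\dots,\beta_{k+1}\in\langle g_1,\dots,g_n\rangle$ such that $$a_1=\frac{\det\mathcal{R}_k(\beta_1,\dots,\beta_{k+1})}{\det M_{k+1}(\beta_1,\dots,\beta_{k+1})}.$$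
   Context: For $\beta_1,\dots,\beta_s\in\mathbb{F}_{q^m}$, the $t\times s$ Moore matrix $M_t(\beta_1,\dots,\beta_s)$ has $(i,j)$ entry $\beta_j^{q^{i-1}}$, $1\le i\le t$. $\mathcal{R}_k(\beta_1,\dots,\beta_{k+1})$ is the $(k+1)\times(k+1)$ matrix obtained from $M_{k+2}(\beta_1,\dots,\beta_{k+1})$ by deleting the row $(\beta_1^{q^k},\dots,\beta_{k+1}^{q^k})$. A $q$-linearized polynomial over $\mathbb{F}_{q^m}$ is $L(x)=\sum_{i=0}^{d}a_ix^{q^i}$, $a_i\in\mathbb{F}_{q^m}$, with $q$-degree $d$ if $a_d\neq 0$; $\mathcal{L}_q(x,\mathbb{F}_{q^m})$ is the set of these. Rank distance: $d_R(\mathbf{u},\mathbf{v})=\dim_{\mathbb{F}_q}\langle u_1-v_1,\dots,u_n-v_n\rangle$, $d_R(\mathbf{u},C)=\min_{\mathbf{c}\in C}d_R(\mathbf{u},\mathbf{c})$; a deep hole is a word attaining the covering radius $\max_{\mathbf{u}}d_R(\mathbf{u},C)$, which for $\mathcal{G}$ equals $n-k$. The Gabidulin code of dimension $k$ is $\mathcal{G}=\{(v(g_1),\dots,v(g_n)) : v\in\mathcal{L}_q(x,\mathbb{F}_{q^m}),\ v=0\text{ or }\deg_q(v)<k\}$. *)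

(* Defs.v *)
(* F_{q^m} is a finite field L with #|L| = q^m; the subfield
   F_q is {x | x^q = x}. *)
From HB Require Import structures.
From mathcomp Require Import all_boot all_order all_algebra all_field.
Set Implicit Arguments. Unset Strict Implicit. Unset Printing Implicit Defensive.
Import GRing.Theory.
Local Open Scope ring_scope.

Definition prime_power (q : nat) : Prop :=
  exists p e : nat, prime p /\ (0 < e)%N /\ q = (p ^ e)%N.

Section Gab.
Variable L : finFieldType.
Variable q : nat.

Definition Fq_indep (n : nat) (v : 'I_n -> L) : Prop :=
  forall c : 'I_n -> L, (forall i, c i ^+ q = c i) ->
    \sum_(i < n) c i * v i = 0 -> forall i, c i = 0.

Definition in_Fq_span (n : nat) (g : 'I_n -> L) (x : L) : Prop :=
  exists c : 'I_n -> L, (forall i, c i ^+ q = c i) /\ x = \sum_(i < n) c i * g i.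

Definition Fq_indep_on (n : nat) (v : 'I_n -> L) (S : {set 'I_n}) : bool :=
  [forall c : {ffun 'I_n -> L},
     ([forall i, c i ^+ q == c i] && (\sum_(i in S) c i * v i == 0))
       ==> [forall i in S, c i == 0]].

(* dim_{F_q} <v_1,...,v_n> = size of a largest independent subfamily *)
Definition rank_q (n : nat) (v : 'I_n -> L) : nat :=
  \max_(S : {set 'I_n} | Fq_indep_on v S) #|S|.

Definition dR (n : nat) (u v : 'I_n -> L) : nat := rank_q (fun i => u i - v i).

Definition linq_eval (k : nat) (a : 'I_k -> L) (x : L) : L :=
  \sum_(i < k) a i * x ^+ (q ^ i).

Definition gab_word (n k : nat) (g : 'I_n -> L) (a : {ffun 'I_k -> L}) : 'I_n -> L :=
  fun j => linq_eval a (g j).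

Definition dR_code (n k : nat) (g : 'I_n -> L) (u : 'I_n -> L) : nat :=
  \big[minn/n]_(a : {ffun 'I_k -> L}) dR u (gab_word g a).

Definition moore (t s : nat) (b : 'I_s -> L) : 'M[L]_(t, s) :=
  \matrix_(i < t, j < s) b j ^+ (q ^ i).

(* R_k(beta_1..beta_{k+1}): M_{k+2} with the row of exponent q^k removed *)
Definition moreR (k : nat) (b : 'I_k.+1 -> L) : 'M[L]_k.+1 :=
  \matrix_(i < k.+1, j < k.+1) b j ^+ (q ^ (if (i < k)%N then i : nat else k.+1)).

End Gab.

(* Main.v *)
Require Import Defs.
From HB Require Import structures.
From mathcomp Require Import all_boot all_order all_algebra all_field.
From mathcomp Require Import ring zify.
Set Implicit Arguments. Unset Strict Implicit. Unset Printing Implicit Defensive.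
Import GRing.Theory.
Local Open Scope ring_scope.

Section Basic.
Variable L : finFieldType.
Variable q : nat.
Hypothesis Hq2 : (1 < q)%N.
Hypothesis Frob : forall x y : L, (x + y) ^+ q = x ^+ q + y ^+ q.

Definition FQ : {set L} := [set x | x ^+ q == x].

Lemma inFQ x : (x \in FQ) = (x ^+ q == x). Proof. by rewrite inE. Qed.

Lemma FrobN (x : L) : (- x) ^+ q = - x ^+ q.
Proof.
apply/eqP; rewrite -subr_eq0 opprK -Frob addNr expr0n.
by case: q Hq2.
Qed.

Lemma fq0 : (0 : L) \in FQ. Proof. by rewrite inFQ expr0n; case: q Hq2. Qed.
Lemma fq1 : (1 : L) \in FQ. Proof. by rewrite inFQ expr1n. Qed.
Lemma fqD a b : a \in FQ -> b \in FQ -> a + b \in FQ.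
Proof. by rewrite !inFQ Frob => /eqP-> /eqP->. Qed.
Lemma fqN a : a \in FQ -> - a \in FQ.
Proof. by rewrite !inFQ FrobN => /eqP->. Qed.
Lemma fqB a b : a \in FQ -> b \in FQ -> a - b \in FQ.
Proof. by move=> ? ?; rewrite fqD ?fqN. Qed.
Lemma fqM a b : a \in FQ -> b \in FQ -> a * b \in FQ.
Proof. by rewrite !inFQ exprMn => /eqP-> /eqP->. Qed.
Lemma fqV a : a \in FQ -> a^-1 \in FQ.
Proof. by rewrite !inFQ exprVn => /eqP->. Qed.

Lemma FrobX i (x y : L) : (x + y) ^+ (q ^ i) = x ^+ (q ^ i) + y ^+ (q ^ i).
Proof.
elim: i => [|i IH]; first by rewrite !expn0 !expr1.
by rewrite expnSr !exprM IH Frob.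
Qed.

Lemma fqX a i : a \in FQ -> a ^+ (q ^ i) = a.
Proof.
rewrite inFQ => /eqP Ha; elim: i => [|i IH]; first by rewrite expn0 expr1.
by rewrite expnSr exprM IH Ha.
Qed.

Definition linq (h : L -> L) :=
  (forall x y, h (x + y) = h x + h y) /\ (forall a x, a \in FQ -> h (a * x) = a * h x).

Lemma linq0 h : linq h -> h 0 = 0.
Proof. by case=> hD _; apply: (addrI (h 0)); rewrite -hD !addr0. Qed.

Lemma linq_sum h s (c : 'I_s -> L) (v : 'I_s -> L) : linq h ->
  (forall i, c i \in FQ) -> h (\sum_i c i * v i) = \sum_i c i * h (v i).
Proof.
move=> hl Hc; have h0 := linq0 hl; case: hl => hD hZ.
rewrite (big_morph h hD h0); apply: eq_bigr => i _; exact: hZ.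
Qed.

Lemma linq_pow i : linq (fun x => x ^+ (q ^ i)).
Proof. by split=> [x y|a x Ha]; rewrite ?FrobX // exprMn fqX. Qed.

Lemma linq_add h1 h2 : linq h1 -> linq h2 -> linq (fun x => h1 x + h2 x).
Proof.
case=> D1 Z1 [D2 Z2]; split=> [x y|a x Ha]; first by rewrite D1 D2 addrACA.
by rewrite Z1 // Z2 // mulrDr.
Qed.

Lemma linq_scale b h : linq h -> linq (fun x => b * h x).
Proof.
case=> D1 Z1; split=> [x y|a x Ha]; first by rewrite D1 mulrDr.
by rewrite Z1 // mulrCA.
Qed.

Lemma linq_opp h : linq h -> linq (fun x => - h x).
Proof.
case=> D1 Z1; split=> [x y|a x Ha]; first by rewrite D1 opprD.
by rewrite Z1 // mulrN.
Qed.

Lemma linq_eval_linq s (w : 'I_s -> L) : linq (linq_eval q w).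
Proof.
split=> [x y|a x Ha]; rewrite /linq_eval.
  by rewrite -big_split; apply: eq_bigr => i _; rewrite FrobX mulrDr.
by rewrite mulr_sumr; apply: eq_bigr => i _; rewrite exprMn fqX // mulrCA.
Qed.

Definition CF s := [set c : {ffun 'I_s -> L} | [forall i, c i \in FQ]].
Definition CFS s (S : {set 'I_s}) :=
  [set c in CF s | [forall i, (i \notin S) ==> (c i == 0)]].
Definition comb s (v : 'I_s -> L) (c : {ffun 'I_s -> L}) := \sum_i c i * v i.
Definition spanS s (v : 'I_s -> L) (S : {set 'I_s}) := [set comb v c | c in CFS S].
Definition span s (v : 'I_s -> L) := spanS v setT.

Lemma card_CFS s (S : {set 'I_s}) : #|CFS S| = (#|FQ| ^ #|S|)%N.
Proof.
rewrite -(card_pffun_on 0); apply: eq_card => c; rewrite !inE.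
apply/idP/idP.
  case/andP => /forallP H1 /forallP H2; apply/pffun_onP; split.
    apply/supportP => x xS; apply/eqP; exact: (implyP (H2 x) xS).
  by move=> _ /imageP [x _ ->]; exact: H1.
case/pffun_onP => /supportP Hs Hv0.
have Hv : forall x, x \in S -> c x \in FQ by move=> x xS; apply: Hv0; apply: image_f.
 apply/andP; split; apply/forallP => x.
  by case: (boolP (x \in S)) => xS; [exact: Hv | rewrite (Hs x xS) fq0].
by apply/implyP => xS; rewrite Hs.
Qed.

Lemma CFSP s (S : {set 'I_s}) (c : {ffun 'I_s -> L}) :
  reflect ((forall i, c i \in FQ) /\ (forall i, i \notin S -> c i = 0)) (c \in CFS S).
Proof.
rewrite !inE; apply: (iffP andP) => [[/forallP H1 /forallP H2]|[H1 H2]].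
  by split=> // i iS; apply/eqP; exact: (implyP (H2 i) iS).
by split; apply/forallP => i //; apply/implyP => iS; rewrite H2.
Qed.

Lemma spanSP s (v : 'I_s -> L) (S : {set 'I_s}) x :
  reflect (exists2 c, c \in CFS S & x = comb v c) (x \in spanS v S).
Proof. exact: imsetP. Qed.

Lemma spanS0 s (v : 'I_s -> L) (S : {set 'I_s}) : 0 \in spanS v S.
Proof.
apply/spanSP; exists [ffun => 0]; first by apply/CFSP; split=> i; rewrite ffunE // fq0.
by rewrite /comb big1 // => i _; rewrite ffunE mul0r.
Qed.

Lemma spanSD s (v : 'I_s -> L) (S : {set 'I_s}) x y :
  x \in spanS v S -> y \in spanS v S -> x + y \in spanS v S.
Proof.
case/spanSP => c /CFSP [c1 c2] -> /spanSP [d /CFSP [d1 d2] ->].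
apply/spanSP; exists [ffun i => c i + d i].
  by apply/CFSP; split=> i; rewrite ffunE ?fqD // => iS; rewrite c2 ?d2 ?addr0.
by rewrite /comb -big_split; apply: eq_bigr => i _; rewrite ffunE mulrDl.
Qed.

Lemma spanSZ s (v : 'I_s -> L) (S : {set 'I_s}) a x :
  a \in FQ -> x \in spanS v S -> a * x \in spanS v S.
Proof.
move=> Ha /spanSP [c /CFSP [c1 c2] ->].
apply/spanSP; exists [ffun i => a * c i].
  by apply/CFSP; split=> i; rewrite ffunE ?fqM // => iS; rewrite c2 ?mulr0.
by rewrite /comb mulr_sumr; apply: eq_bigr => i _; rewrite ffunE mulrA.
Qed.

Lemma spanSN s (v : 'I_s -> L) (S : {set 'I_s}) x : x \in spanS v S -> - x \in spanS v S.
Proof. by move=> Hx; rewrite -mulN1r spanSZ // fqN // fq1. Qed.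

Lemma spanS_vi s (v : 'I_s -> L) (S : {set 'I_s}) i : i \in S -> v i \in spanS v S.
Proof.
move=> iS; apply/spanSP; exists [ffun j => (j == i)%:R].
  apply/CFSP; split=> j; rewrite ffunE; first by case: eqP; rewrite ?fq1 ?fq0.
  by case: eqP => // -> ; rewrite iS.
rewrite /comb (bigD1 i) //= big1 ?addr0 => [|j /negPf ji]; rewrite ffunE ?ji ?mul0r //.
by rewrite eqxx mul1r.
Qed.

Lemma spanS_sum s (v : 'I_s -> L) (S : {set 'I_s}) t (c : 'I_t -> L) (u : 'I_t -> L) :
  (forall i, c i \in FQ) -> (forall i, u i \in spanS v S) ->
  \sum_i c i * u i \in spanS v S.
Proof.
move=> Hc Hu; elim/big_ind: _; [exact: spanS0 | exact: spanSD |].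
by move=> i _; apply: spanSZ.
Qed.

Lemma comb_in s (v : 'I_s -> L) (S : {set 'I_s}) c : c \in CFS S -> comb v c = \sum_(i in S) c i * v i.
Proof.
case/CFSP => _ H; rewrite /comb [RHS]big_mkcond; apply: eq_bigr => i _.
by case: ifP => // /negbT /H ->; rewrite mul0r.
Qed.

Lemma indep_onP s (v : 'I_s -> L) (S : {set 'I_s}) :
  reflect (forall c : {ffun 'I_s -> L}, (forall i, c i \in FQ) ->
            \sum_(i in S) c i * v i = 0 -> forall i, i \in S -> c i = 0)
          (Fq_indep_on q v S).
Proof.
apply: (iffP forallP) => [H c Hc Hs i iS | H c].
  move/implyP: (H c); rewrite Hs eqxx andbT.
  have -> : [forall i, c i ^+ q == c i] by apply/forallP => j; rewrite -inFQ.
  by move/(_ isT)/forall_inP/(_ i iS)/eqP.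
apply/implyP => /andP [/forallP Hc /eqP Hs]; apply/forall_inP => i iS.
by apply/eqP; apply: H iS => // j; rewrite inFQ.
Qed.



Lemma card_spanS_indep s (v : 'I_s -> L) (S : {set 'I_s}) :
  Fq_indep_on q v S -> (#|FQ| ^ #|S| <= #|span v|)%N.
Proof.
move/indep_onP => Hind; rewrite -card_CFS.
have <- : #|[set comb v c | c in CFS S]| = #|CFS S|.
  apply: card_in_imset => c d Hc Hd Hcd.
  case/CFSP: (Hc) => c1 c2; case/CFSP: (Hd) => d1 d2.
  have He := Hind [ffun i => c i - d i].
  apply/ffunP => i; case: (boolP (i \in S)) => iS; last by rewrite c2 ?d2.
  apply/eqP; rewrite -subr_eq0; apply/eqP.
  have := He _ _ i iS; rewrite ffunE; apply.
    by move=> j; rewrite ffunE fqB.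
  rewrite (comb_in v Hc) (comb_in v Hd) in Hcd.
  rewrite (eq_bigr (fun i => c i * v i - d i * v i)); last by move=> j _; rewrite ffunE mulrBl.
  by rewrite sumrB Hcd subrr.
apply: subset_leq_card; apply/subsetP => x /imsetP [c Hc ->].
apply/imsetP; exists c => //; apply/CFSP; case/CFSP: Hc => c1 _; split=> // i.
by rewrite inE.
Qed.

Lemma card_spanS_le s (v : 'I_s -> L) (S : {set 'I_s}) :
  (#|spanS v S| <= #|FQ| ^ #|S|)%N.
Proof. by rewrite -card_CFS; apply: leq_imset_card. Qed.

Lemma indep_setT s (v : 'I_s -> L) : Fq_indep q v -> Fq_indep_on q v setT.
Proof.
move=> H; apply/indep_onP => c Hc Hs i _; apply: (H c) => //.
  by move=> j; apply/eqP; rewrite -inFQ.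
by rewrite -[X in _ = X]Hs; apply: eq_bigl => j; rewrite inE.
Qed.

Lemma card_span s (v : 'I_s -> L) : Fq_indep q v -> #|span v| = (#|FQ| ^ s)%N.
Proof.
move=> /indep_setT /card_spanS_indep H; apply/eqP; rewrite eqn_leq.
by move: H (card_spanS_le v setT); rewrite cardsT card_ord => -> ->.
Qed.

Lemma in_spanP s (v : 'I_s -> L) x : x \in span v <-> in_Fq_span q v x.
Proof.
split.
  case/spanSP => c /CFSP [c1 _] ->; exists (fun i => c i); split=> // i.
  by apply/eqP; rewrite -inFQ.
case=> c [Hc ->]; apply/spanSP; exists [ffun i => c i].
  by apply/CFSP; split=> i; [rewrite ffunE inFQ Hc | rewrite inE].
by rewrite /comb; apply: eq_bigr => i _; rewrite ffunE.
Qed.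

Lemma span_le_rank s (u : 'I_s -> L) : (#|span u| <= #|FQ| ^ rank_q q u)%N.
Proof.
rewrite /rank_q.
have H0 : Fq_indep_on q u set0 by apply/indep_onP => c _ _ i; rewrite inE.
have [S HS Hmax] := @eq_bigmax_cond _ (fun S => Fq_indep_on q u S) (fun S : {set 'I_s} => #|S|)
   (ltac:(apply/card_gt0P; exists set0; exact: H0)).
rewrite Hmax; apply: leq_trans (card_spanS_le u S).
apply: subset_leq_card; apply/subsetP => x /spanSP [c /CFSP [c1 _] ->].
rewrite /comb; apply: spanS_sum => // j.
case: (boolP (j \in S)) => jS; first exact: spanS_vi.
have Hn : ~~ Fq_indep_on q u (j |: S).
  apply/negP => Hj.
  have := @leq_bigmax_cond _ (fun S => Fq_indep_on q u S) (fun S : {set 'I_s} => #|S|) _ Hj.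
  by rewrite Hmax cardsU1 jS ltnn.
move/forallPn: Hn => [d]; rewrite negb_imply => /andP [/andP [/forallP Hd /eqP Hs]].
move=> /forall_inPn [i iS di].
have Hd' : forall i, d i \in FQ by move=> i'; rewrite inFQ Hd.
rewrite big_setU1 //= in Hs.
case: (eqVneq (d j) 0) => dj.
  rewrite dj mul0r add0r in Hs.
  have := indep_onP _ _ HS d Hd' Hs.
  move: iS; rewrite !inE => /orP [/eqP Eij|iS']; first by rewrite Eij dj eqxx in di.
  by move/(_ i iS')/eqP; rewrite (negPf di).
have -> : u j = - (d j)^-1 * \sum_(i in S) d i * u i.
  have E : d j * u j = - \sum_(i in S) d i * u i by apply/eqP; rewrite -addr_eq0 Hs.
  by rewrite mulNr -mulrN -E mulKf.
apply: spanSZ; first by apply: fqN; apply: fqV.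
elim/big_ind: _ => [|x1 y1|i1 iS1]; [exact: spanS0 | exact: spanSD |].
by apply: spanSZ => //; apply: spanS_vi.
Qed.

Lemma card_ker_im (V : {set L}) (h : L -> L) :
  (forall x y, x \in V -> y \in V -> x + y \in V) -> (forall x, x \in V -> - x \in V) ->
  (forall x y, h (x + y) = h x + h y) ->
  #|V| = (#|[set x in V | h x == 0%R]| * #|h @: V|)%N.
Proof.
move=> VD VN hD.
have h0 : h 0 = 0 by apply: (addrI (h 0)); rewrite -hD !addr0.
have hN x : h (- x) = - h x by apply/eqP; rewrite -addr_eq0 -hD addNr h0.
rewrite -sum1_card (partition_big h (mem (h @: V))) /=; last first.
  by move=> x xV; apply: imset_f.
rewrite mulnC -sum_nat_const; apply: eq_bigr => y /imsetP [x0 x0V ->].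
rewrite sum1dep_card -(card_imset [set x in V | h x == 0%R] (addrI x0)); apply: eq_card => x.
rewrite inE; apply/andP/imsetP.
  case => xV /eqP hx; exists (x - x0); last by rewrite addrC subrK.
  by rewrite inE VD ?VN //= hD hN hx subrr.
case=> z; rewrite inE => /andP [zV /eqP hz] ->; split; first exact: VD.
by rewrite hD hz addr0.
Qed.

Lemma FQ_gt1 : (1 < #|FQ|)%N.
Proof.
have : [set (0 : L); 1] \subset FQ by apply/subsetP => x; rewrite !inE => /orP [] /eqP ->; rewrite -inFQ ?fq0 ?fq1.
by move/subset_leq_card; rewrite cards2 eq_sym oner_eq0.
Qed.

Lemma span_sub s (v : 'I_s -> L) t (b : 'I_t -> L) :
  (forall i, b i \in span v) -> span b \subset span v.
Proof.
move=> Hb; apply/subsetP => x /spanSP [c /CFSP [c1 _] ->].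
by apply: spanS_sum.
Qed.

Lemma span_img s (g : 'I_s -> L) h : linq h ->
  span (fun i => h (g i)) = h @: span g.
Proof.
move=> hl; apply/setP => x; apply/spanSP/imsetP.
  case=> c Hc ->; exists (comb g c); first by apply/imsetP; exists c.
  by rewrite /comb linq_sum //; case/CFSP: Hc.
case=> y /spanSP [c Hc ->] ->; exists c => //.
by rewrite /comb linq_sum //; case/CFSP: Hc.
Qed.

Lemma R1 h n (g : 'I_n -> L) t (b : 'I_t -> L) : linq h -> Fq_indep q g ->
  Fq_indep q b -> (forall i, b i \in span g) -> (forall i, h (b i) = 0) ->
  (rank_q q (fun j => h (g j)) + t <= n)%N.
Proof.
move=> hl Hg Hb bV hb.
have HV := @card_ker_im (span g) h (@spanSD _ g _) (@spanSN _ g _) hl.1.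
rewrite card_span // in HV.
set K := [set x in span g | h x == 0%R] in HV.
have Kb : (#|FQ| ^ t <= #|K|)%N.
  rewrite -(card_span Hb); apply: subset_leq_card; apply/subsetP => x xb.
  rewrite inE (subsetP (span_sub bV)) //=.
  case/spanSP: xb => c /CFSP [c1 _] ->; rewrite /comb linq_sum //.
  by rewrite big1 // => i _; rewrite hb mulr0.
have HS : forall S, Fq_indep_on q (fun j => h (g j)) S -> (#|S| + t <= n)%N.
  move=> S /card_spanS_indep; rewrite span_img // => HS.
  rewrite -(leq_exp2l _ _ FQ_gt1) expnD mulnC HV.
  by apply: leq_mul.
have tn : (t <= n)%N by have := HS set0; rewrite cards0 add0n; apply; apply/indep_onP => c _ _ i; rewrite inE.
rewrite addnC -leq_subRL //; apply/bigmax_leqP => S /HS; rewrite leq_subRL //.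
by rewrite addnC.
Qed.

Lemma R2 h n (g : 'I_n -> L) : linq h -> Fq_indep q g ->
  (#|FQ| ^ n <= #|[set x in span g | h x == 0%R]| * #|FQ| ^ rank_q q (fun j => h (g j)))%N.
Proof.
move=> hl Hg.
have HV := @card_ker_im (span g) h (@spanSD _ g _) (@spanSN _ g _) hl.1.
rewrite card_span // in HV; rewrite HV leq_mul2l; apply/orP; right.
by rewrite -span_img //; apply: span_le_rank.
Qed.

Definition ext t (b : 'I_t -> L) (x : L) : 'I_t.+1 -> L :=
  fun i => if unlift ord_max i is Some j then b j else x.

Lemma widen_lift t (j : 'I_t) : widen_ord (leqnSn t) j = lift ord_max j.
Proof. by apply: val_inj; rewrite /= /bump leqNgt ltn_ord add0n. Qed.

Lemma ext_lift t (b : 'I_t -> L) x j : ext b x (lift ord_max j) = b j.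
Proof. by rewrite /ext liftK. Qed.

Lemma ext_max t (b : 'I_t -> L) x : ext b x ord_max = x.
Proof. by rewrite /ext unlift_none. Qed.

Lemma extract (K : {set L}) t :
  0 \in K -> (forall x y, x \in K -> y \in K -> x + y \in K) ->
  (forall a x, a \in FQ -> x \in K -> a * x \in K) ->
  (#|FQ| ^ t <= #|K|)%N ->
  exists b : 'I_t -> L, Fq_indep q b /\ (forall i, b i \in K).
Proof.
move=> K0 KD KZ; elim: t => [|t IH] Ht.
  by exists (fun _ => 0); split=> [c _ _ []|[]].
have [b [Hb bK]] : exists b : 'I_t -> L, Fq_indep q b /\ (forall i, b i \in K).
  apply: IH; apply: leq_trans Ht; rewrite leq_exp2l ?FQ_gt1 //.
have spK : span b \subset K.
  apply/subsetP => y /spanSP [c /CFSP [c1 _] ->]; rewrite /comb.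
  elim/big_ind: _ => // i _; exact: KZ.
have : ~~ (K \subset span b).
  apply/negP => /subset_leq_card; rewrite card_span //.
  move=> H; have := leq_trans Ht H; rewrite leq_exp2l ?FQ_gt1 //.
  by rewrite ltnn.
case/subsetPn => x xK xb.
exists (ext b x); split; last first.
  by move=> i; rewrite /ext; case: unlift.
move=> c Hc; rewrite big_ord_recr /=.
under eq_bigr => i _ do rewrite widen_lift ext_lift.
rewrite ext_max => Hs.
have cm : c ord_max = 0.
  apply/eqP; apply: contraNT xb => cm.
  have E : c ord_max * x = - \sum_(i < t) c (lift ord_max i) * b i.
    by apply/eqP; rewrite -addr_eq0 addrC Hs.
  have -> : x = - (c ord_max)^-1 * \sum_(i < t) c (lift ord_max i) * b i.
    by rewrite mulNr -mulrN -E mulKf.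
  apply: spanSZ; first by apply: fqN; apply: fqV; rewrite inFQ Hc.
  apply: spanS_sum => [i|i]; first by rewrite inFQ Hc.
  by apply: spanS_vi; rewrite inE.
rewrite cm mul0r addr0 in Hs.
have Hl := Hb (fun i => c (lift ord_max i)) (fun i => Hc _) Hs.
by move=> i; case: (unliftP ord_max i) => [j ->|->].
Qed.

Lemma qpoly_roots s (w : 'I_s -> L) i0 : w i0 != 0 ->
  (#|[set x | linq_eval q w x == 0%R]| <= q ^ s.-1)%N.
Proof.
move=> wi0.
pose p : {poly L} := \sum_(i < s) w i *: 'X^(q ^ i).
have Hp x : p.[x] = linq_eval q w x.
  by rewrite /p horner_sum; apply: eq_bigr => i _; rewrite hornerZ hornerXn.
have p0 : p != 0.
  apply/negP => /eqP /(congr1 (fun p : {poly L} => p`_(q ^ i0))).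
  rewrite coef0 /p coef_sum (bigD1 i0) //= big1 => [|i ii0].
    by rewrite coefZ coefXn eqxx mulr1 addr0; apply/eqP.
  rewrite coefZ coefXn; case: eqP => [/(expnI Hq2) /val_inj E|_]; last by rewrite mulr0.
  by rewrite E eqxx in ii0.
have sp : (size p <= (q ^ s.-1).+1)%N.
  apply: leq_trans (size_sum _ _ _) _; apply/bigmax_leqP => i _.
  apply: leq_trans (size_scale_leq _ _) _; rewrite size_polyXn ltnS.
  apply: leq_pexp2l; first exact: ltnW.
  by rewrite -ltnS (ltn_predK (ltn_ord i)).
have H2 : (#|[set x | linq_eval q w x == 0%R]| < size p)%N.
  rewrite cardE; apply: (max_poly_roots p0); last exact: enum_uniq.
  by apply/allP => x; rewrite mem_enum inE /root Hp.
by have := leq_trans H2 sp; rewrite ltnS.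
Qed.

Lemma card_FQ m : (0 < m)%N -> #|L| = (q ^ m)%N -> #|FQ| = q.
Proof.
move=> m0 HL; apply/eqP; rewrite eqn_leq; apply/andP; split.
  pose w := fun i : 'I_2 => if i == ord0 then -1 else (1 : L).
  have E : FQ = [set x | linq_eval q w x == 0%R].
    apply/setP => x; rewrite !inE /linq_eval !big_ord_recl big_ord0 /w /=.
    by rewrite expn0 expn1 expr1 mulN1r mul1r addr0 addrC subr_eq0.
  by rewrite E; apply: (@qpoly_roots 2 w ord0); rewrite /w eqxx oppr_eq0 oner_eq0.
pose T := linq_eval q (fun _ : 'I_m => (1 : L)).
have Tl : linq T := linq_eval_linq _.
have HV := @card_ker_im setT T (fun _ _ _ _ => in_setT _) (fun _ _ => in_setT _) Tl.1.
have Hk : (#|[set x in setT | T x == 0%R]| <= q ^ m.-1)%N.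
  apply: leq_trans (@qpoly_roots m (fun _ : 'I_m => (1 : L)) (Ordinal m0) (oner_neq0 _)).
  by apply: subset_leq_card; apply/subsetP => x; rewrite !inE.
have Him : T @: setT \subset FQ.
  apply/subsetP => y /imsetP [x _ ->]; rewrite inFQ.
  have -> : T x ^+ q = \sum_(i < m) x ^+ (q ^ i.+1).
    have z0 : (0 : L) ^+ q = 0 by rewrite expr0n; case: q Hq2.
    rewrite /T /linq_eval (big_morph (fun y => y ^+ q) Frob z0).
    by apply: eq_bigr => i _; rewrite !mul1r expnS mulnC exprM.
  rewrite /T /linq_eval; case: m m0 HL {HV Hk T Tl} => // m' _ HL.
  rewrite big_ord_recr big_ord_recl /= -HL expf_card.
  rewrite expn0 expr1 mul1r addrC; apply/eqP; congr (_ + _).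
  by apply: eq_bigr => i _; rewrite mul1r /bump /= add1n.
apply: leq_trans (subset_leq_card Him).
have q0 : (0 < q)%N by apply: ltnW.
rewrite cardsT HL in HV.
have : (q ^ m <= q ^ m.-1 * #|T @: setT|)%N by rewrite HV leq_mul2r Hk orbT.
move=> H; have : (q * q ^ m.-1 <= #|T @: setT| * q ^ m.-1)%N by rewrite -expnS prednK // mulnC.
by rewrite leq_pmul2r // expn_gt0 q0.
Qed.

Hypothesis HQ : #|FQ| = q.

Lemma moore_det s (b : 'I_s -> L) : Fq_indep q b -> \det (moore q s b) != 0.
Proof.
move=> Hb; apply/negP => /det0P [v v0 Hv].
have [i0 Hi0] : exists i, v 0 i != 0.
  apply/existsP; apply: contraNT v0 => /existsPn H; apply/eqP/rowP => j.
  by move: (H j); rewrite negbK mxE => /eqP ->.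
have Hroot j : linq_eval q (fun i => v 0 i) (b j) = 0.
  have := congr1 (fun M : 'rV[L]_s => M 0 j) Hv; rewrite !mxE => <-.
  by apply: eq_bigr => i _; rewrite mxE.
have sub : span b \subset [set x | linq_eval q (fun i => v 0 i) x == 0%R].
  apply/subsetP => x /spanSP [c /CFSP [c1 _] ->]; rewrite inE /comb.
  rewrite linq_sum //; last exact: linq_eval_linq.
  by rewrite big1 // => i _; rewrite Hroot mulr0.
have := leq_trans (subset_leq_card sub) (qpoly_roots Hi0).
rewrite card_span // HQ leq_exp2l //.
by case: s i0 {b Hb v v0 Hv Hi0 Hroot sub} => [[]|s] //; rewrite /= ltnn.
Qed.

Lemma solve s (b : 'I_s -> L) (r : 'I_s -> L) : Fq_indep q b ->
  exists w : 'I_s -> L, forall j, linq_eval q w (b j) = r j.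
Proof.
move=> Hb; have U : moore q s b \in unitmx by rewrite unitmxE unitfE moore_det.
pose u := (\row_j r j) *m invmx (moore q s b).
exists (fun i => u 0 i) => j.
have := congr1 (fun M : 'rV[L]_s => M 0 j) (mulmxKV U (\row_j r j)); rewrite /= !mxE => <-.
by rewrite /linq_eval; apply: eq_bigr => i _; rewrite [moore q s b i j]mxE.
Qed.

Lemma cramer_row n (M : 'M[L]_n) (w r : 'rV[L]_n) k : w *m M = r ->
  \det (\matrix_(i, j) if i == k then r 0 j else M i j) = w 0 k * \det M.
Proof.
move=> Hr; rewrite (expand_det_row _ k).
have Hc j : cofactor (\matrix_(i, j) if i == k then r 0 j else M i j) k j = cofactor M k j.
  rewrite /cofactor; congr (_ * _); congr (\det _); apply/matrixP => a b.
  by rewrite !mxE eq_sym (negbTE (neq_lift k a)).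
under eq_bigr => j _ do rewrite Hc mxE eqxx.
rewrite -Hr.
transitivity (\sum_i w 0 i * (M *m \adj M) i k).
  under eq_bigr => j _ do rewrite mxE big_distrl /=.
  rewrite exchange_big /=; apply: eq_bigr => i _; rewrite mxE mulr_sumr.
  by apply: eq_bigr => j _; rewrite [\adj M j k]mxE mulrA.
rewrite mul_mx_adj (bigD1 k) //= big1 => [|i ik]; rewrite mxE ?eqxx ?mulr1n ?addr0 //.
by rewrite (negbTE ik) mulr0n mulr0.
Qed.

Lemma key_a1 k (b : 'I_k.+1 -> L) (w : 'I_k.+1 -> L) : Fq_indep q b ->
  (forall j, b j ^+ (q ^ k.+1) + linq_eval q w (b j) = 0) ->
  \det (moreR q b) / \det (moore q k.+1 b) = - w ord_max.
Proof.
move=> Hb Hw.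
have Hm : (\row_i (- w i)) *m moore q k.+1 b = \row_j (b j ^+ (q ^ k.+1)).
  apply/rowP => j; rewrite !mxE.
  have := Hw j; move=> /eqP; rewrite addr_eq0 => /eqP ->.
  rewrite /linq_eval -sumrN; apply: eq_bigr => i _; rewrite /moore !mxE mulNr.
  done.
have C := cramer_row ord_max Hm; rewrite mxE in C.
rewrite (_ : (\matrix_(i, j) if i == ord_max then (\row_j b j ^+ (q ^ k.+1)) 0 j
            else moore q k.+1 b i j) = moreR q b) in C; last first.
  apply/matrixP => i j; rewrite /moreR /moore !mxE.
  case: (ltnP i k) => ik.
    have -> : (i == ord_max) = false by apply/negbTE; rewrite -(inj_eq val_inj) /= neq_ltn ik.
    by [].
  have -> : i = ord_max by apply/val_inj/eqP; rewrite eqn_leq ik -ltnS ltn_ord.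
  by rewrite eqxx.
by rewrite C mulfK ?moore_det.
Qed.

Lemma linq_eval_ext k (d : 'I_k -> L) e x :
  linq_eval q (ext d e) x = linq_eval q d x + e * x ^+ (q ^ k).
Proof.
rewrite /linq_eval big_ord_recr /=.
by under eq_bigr => i _ do rewrite widen_lift ext_lift; rewrite ext_max.
Qed.

Lemma bigmin_le (T : finType) (F : T -> nat) N a0 : (\big[minn/N]_(a : T) F a <= F a0)%N.
Proof.
rewrite unlock; have : a0 \in index_enum T by apply: mem_index_enum.
elim: (index_enum T) => //= a r IH; rewrite inE => /orP [/eqP <-|H].
  exact: geq_minl.
exact: leq_trans (geq_minr _ _) (IH H).
Qed.

Lemma bigmin_lt (T : finType) (F : T -> nat) N x : (x <= N)%N ->
  (\big[minn/N]_(a : T) F a < x)%N -> exists a, (F a < x)%N.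
Proof.
move=> xN; case: (boolP [exists a, F a < x]%N) => [/existsP [a Ha] _|/existsPn H]; first by exists a.
suff : (x <= \big[minn/N]_(a : T) F a)%N by rewrite leqNgt => /negbTE ->.
elim/big_ind: _ => // [u v Hu Hv|a _]; first by rewrite leq_min Hu Hv.
by rewrite leqNgt; apply: H.
Qed.

Lemma rank_ext s (u v : 'I_s -> L) : (forall i, u i = v i) -> rank_q q u = rank_q q v.
Proof.
move=> H; rewrite /rank_q; apply: eq_bigl => S; rewrite /Fq_indep_on.
apply: eq_forallb => d; rewrite (eq_bigr (fun i => d i * v i)) // => i _.
by rewrite H.
Qed.

Lemma main_sec (n k : nat) (g : 'I_n -> L) (a1 : L) (c : 'I_k -> L) :
  (k.+1 < n)%N -> Fq_indep q g ->
  let f := fun x : L => x ^+ (q ^ k.+1) - a1 * x ^+ (q ^ k) + linq_eval q c x in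
  let sigma_f := fun j : 'I_n => f (g j) in
  (dR_code q k g sigma_f <> (n - k)%N) <->
  exists b : 'I_k.+1 -> L,
    [/\ Fq_indep q b, (forall i, in_Fq_span q g (b i)) &
        a1 = \det (moreR q b) / \det (moore q k.+1 b)].
Proof.
move=> Hkn Hg f sigma_f.
pose hA (a : {ffun 'I_k -> L}) := fun x => x ^+ (q ^ k.+1) + linq_eval q (ext (fun i => c i - a i) (- a1)) x.
have hAE (a : {ffun 'I_k -> L}) x : f x - linq_eval q a x = hA a x.
  rewrite /hA /f linq_eval_ext /linq_eval mulNr.
  have -> : \sum_(i < k) (c i - a i) * x ^+ (q ^ i) =
    \sum_(i < k) c i * x ^+ (q ^ i) - \sum_(i < k) a i * x ^+ (q ^ i).
    by rewrite -sumrB; apply: eq_bigr => i _; rewrite mulrBl.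
  ring.
have hAl a : linq (hA a) by apply: linq_add; [exact: linq_pow | exact: linq_eval_linq].
have FE a : dR q sigma_f (gab_word q g a) = rank_q q (fun j => hA a (g j)).
  by rewrite /dR /gab_word /sigma_f; apply: rank_ext => j; rewrite hAE.
have kn : (k <= n)%N by apply: leq_trans (ltnW Hkn); apply: leqnSn.
have Hup : exists a, (rank_q q (fun j => hA a (g j)) + k <= n)%N.
  have [b [Hb bV]] := @extract (span g) k (spanS0 g setT) (@spanSD _ g setT) (@spanSZ _ g setT)
    (ltac:(by rewrite card_span // leq_exp2l ?FQ_gt1)).
  have [d Hd] := solve (fun j => f (b j)) Hb.
  exists [ffun i => d i].
  apply: R1 (hAl _) Hg Hb bV _ => j; rewrite -hAE -[RHS](subrr (f (b j))); congr (_ - _).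
  by rewrite -Hd /linq_eval; apply: eq_bigr => i _; rewrite ffunE.
have Hle : (dR_code q k g sigma_f <= n - k)%N.
  case: Hup => a Ha; rewrite /dR_code; apply: leq_trans (bigmin_le _ n a) _.
  rewrite FE; lia.
split.
  move=> Hne.
  have Hlt : (dR_code q k g sigma_f < n - k)%N by rewrite ltn_neqAle Hle andbT; apply/eqP.
  have [a Ha] := bigmin_lt (leq_subr k n) Hlt.
  rewrite FE in Ha.
  have HR := R2 (hAl a) Hg.
  set K := [set x in span g | hA a x == 0%R] in HR.
  have HK : (#|FQ| ^ k.+1 <= #|K|)%N.
    rewrite -(@leq_pmul2r (#|FQ| ^ rank_q q (fun j => hA a (g j)))); last by rewrite expn_gt0 ltnW // FQ_gt1.
    apply: leq_trans HR; rewrite -expnD leq_exp2l ?FQ_gt1 //; lia.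
  have [hD hZ] := hAl a; have h0 := linq0 (hAl a).
  have [b [Hb bK]] := @extract K k.+1
    (ltac:(by rewrite inE spanS0 h0 eqxx))
    (ltac:(move=> x y; rewrite !inE => /andP [xV /eqP hx] /andP [yV /eqP hy];
           by rewrite spanSD //= hD hx hy addr0))
    (ltac:(move=> u x Hu; rewrite !inE => /andP [xV /eqP hx];
           by rewrite spanSZ //= hZ // hx mulr0)) HK.
  exists b; split => //.
    by move=> i; apply/in_spanP; move: (bK i); rewrite inE => /andP [].
  have := @key_a1 k b (ext (fun i => c i - a i) (- a1)) Hb.
  rewrite ext_max opprK => -> //.
  by move=> j; move: (bK j); rewrite inE => /andP [_ /eqP].
case=> b [Hb bS Ha1].
have [w Hw] := solve (fun j => - b j ^+ (q ^ k.+1)) Hb.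
have Hw' : forall j, b j ^+ (q ^ k.+1) + linq_eval q w (b j) = 0 by move=> j; rewrite Hw addrN.
have wm : w ord_max = - a1 by rewrite Ha1 (key_a1 Hb Hw') opprK.
pose a := [ffun i => c i - w (lift ord_max i)].
have hz : forall j, hA a (b j) = 0.
  move=> j; rewrite -(Hw' j) /hA linq_eval_ext; congr (_ + _).
  rewrite /linq_eval big_ord_recr /= wm; congr (_ + _).
  apply: eq_bigr => i _; rewrite widen_lift ffunE opprB addrC subrK //.
have HR1 := R1 (hAl a) Hg Hb (fun i => proj2 (in_spanP _ _) (bS i)) hz.
move=> Heq; have := bigmin_le (fun a => dR q sigma_f (gab_word q g a)) n a.
rewrite -/(dR_code q k g sigma_f) Heq FE; lia.
Qed.
End Basic.

Theorem lemma3 (L : finFieldType) (q m n k : nat) (g : 'I_n -> L)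
    (a1 : L) (c : 'I_k -> L) :
  prime_power q -> #|L| = (q ^ m)%N ->
  (1 <= k)%N -> (k.+1 < n)%N -> (n <= m)%N ->
  Fq_indep q g ->
  let f := fun x : L => x ^+ (q ^ k.+1) - a1 * x ^+ (q ^ k) + linq_eval q c x in
  let sigma_f := fun j : 'I_n => f (g j) in
  (dR_code q k g sigma_f <> (n - k)%N) <->
  exists b : 'I_k.+1 -> L,
    [/\ Fq_indep q b, (forall i, in_Fq_span q g (b i)) &
        a1 = \det (moreR q b) / \det (moore q k.+1 b)].
Proof.
move=> [p [e [pp [e0 Hq]]]] HL Hk Hkn Hnm Hg.
have Hq2 : (1 < q)%N.
  by rewrite Hq -[1%N](expn0 p) ltn_exp2l // prime_gt1.
have pc : p \in [pchar L].
  by apply: (@card_finPcharP L p (e * m)) => //; rewrite HL Hq expnM.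
have Frob : forall x y : L, (x + y) ^+ q = x ^+ q + y ^+ q.
  move=> x y; apply: exprDn_pchar.
  by rewrite (eq_pnat _ (pcharf_eq pc)) Hq pnatX pnat_id.
have m0 : (0 < m)%N by apply: leq_trans Hnm; apply: leq_trans Hkn.
have HQ := card_FQ Hq2 Frob m0 HL.
exact: (main_sec Hq2 Frob HQ a1 c Hkn Hg).
Qed.
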